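(* For a space $X$ the following are equivalent: (1) $X$ is $L$-selective; (2) $X$ is $S_2$-selective; (3) $X$ is $S_\omega$-selective.
   Context: All spaces are assumed $T_1$. For spaces $Y$, $X$, a map $\varphi:Y\to\mathcal P(X)\setminus\{\emptyset\}$ is lower semicontinuous (l.s.c.) if $\{y:\varphi(y)\cap U\neq\emptyset\}$ is open in $Y$ for every open $U\subseteq X$; a selection is a map $f:Y\to X$ with $f(y)\in\varphi(y)$ for all $y$. $X$ is $Y$-selective if every l.s.c. map from $Y$ to the nonempty closed subsets of $X$ has a continuous selection; $L$-selective means $(\omega+1)$-selective, with $\omega+1$ carrying the order topology. The sequential fan $S_\omega$ is the quotient of the topological sum of countably many convergent sequences (with limits) obtained by identifying all limit points. Arens' space $S_2=\{x\}\cup\{x_n:n\in\omega\}\cup\{x_{n,m}:n,m\in\omega\}$: each $x_{n,m}$ is isolated; a neighborhood base at $x_n$ consists of the sets $\{x_n\}\cup\{x_{n,m}:m\in\omega\setminus K\}$, $K$ finite; a neighborhood base at $x$ consists of the sets $\{x\}\cup\{x_n:n\in\omega\setminus K\}\cup\{x_{n,m}:n\in\omega\setminus K,\ m>f(n)\}$ with $K$ finite and $f:\omega\to\omega$. *)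

(* Defs.v *)
From mathcomp Require Import all_boot.
From mathcomp Require Import all_classical topology.
Set Implicit Arguments. Unset Strict Implicit. Unset Printing Implicit Defensive.
Local Open Scope classical_set_scope.

Definition lsc (Y : Type) (openY : set (set Y)) (X : topologicalType)
  (phi : Y -> set X) : Prop :=
  forall U : set X, open U -> openY [set y | phi y `&` U !=set0].

Definition cont_from (Y : Type) (openY : set (set Y)) (X : topologicalType)
  (f : Y -> X) : Prop :=
  forall U : set X, open U -> openY (f @^-1` U).

Definition selective (Y : Type) (openY : set (set Y)) (X : topologicalType) : Prop :=
  forall phi : Y -> set X,
    (forall y, phi y !=set0 /\ closed (phi y)) ->
    lsc openY phi ->
    exists f : Y -> X, cont_from openY f /\ forall y, phi y (f y).

Definition open_from_base (Y : Type) (B : Y -> set (set Y)) (A : set Y) : Prop :=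
  forall y, A y -> exists2 V, B y V & V `<=` A.

(* None is the point omega, Some n is the natural number n. *)
Definition omega1_base (y : option nat) : set (set (option nat)) :=
  match y with
  | Some n => [set [set Some n]]
  | None => [set V | exists k : nat,
               V = [set z | match z with None => True | Some m => (k <= m)%N end]]
  end.
Definition omega1_open := open_from_base omega1_base.

Definition L_selective (X : topologicalType) := selective omega1_open X.

Inductive S2pt : Type :=
  | S2x : S2pt
  | S2n : nat -> S2pt
  | S2nm : nat -> nat -> S2pt.

Definition S2_base (y : S2pt) : set (set S2pt) :=
  match y with
  | S2nm n m => [set [set S2nm n m]]
  | S2n n => [set V | exists K : set nat, finite_set K /\
               V = [set z | z = S2n n \/ exists m, ~ K m /\ z = S2nm n m]]
  | S2x => [set V | exists (K : set nat) (f : nat -> nat), finite_set K /\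
               V = [set z | z = S2x \/ (exists n, ~ K n /\ z = S2n n)
                            \/ exists n m, ~ K n /\ (f n < m)%N /\ z = S2nm n m]]
  end.
Definition S2_open := open_from_base S2_base.

Definition S2_selective (X : topologicalType) := selective S2_open X.

(* Topological sum of countably many copies of omega+1 (each a convergent
   sequence with its limit): points (n, t), t : option nat. *)
Definition sum_open (A : set (nat * option nat)) : Prop :=
  forall n, omega1_open [set t | A (n, t)].

(* Points of S_omega: None = the common limit point, Some (n,m) = m-th term of
   the n-th sequence.  The quotient map identifies all limit points. *)
Definition Sw_quot (p : nat * option nat) : option (nat * nat) :=
  match p.2 with None => None | Some m => Some (p.1, m) end.

Definition Sw_open (A : set (option (nat * nat))) : Prop :=
  sum_open (Sw_quot @^-1` A).

Definition Sw_selective (X : topologicalType) := selective Sw_open X.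

(* Main.v *)
Require Import Defs.
From mathcomp Require Import all_boot.
From mathcomp Require Import all_classical topology.
From mathcomp Require Import finmap.
Set Implicit Arguments. Unset Strict Implicit. Unset Printing Implicit Defensive.
Local Open Scope classical_set_scope.

Lemma seq_bound (s : seq nat) : exists k, forall n, n \in s -> (n < k)%N.
Proof.
elim: s => [|a s [k Hk]]; first by exists 0%N.
exists (maxn a.+1 k) => n; rewrite in_cons => /orP[/eqP->|/Hk h].
  by rewrite leq_max leqnn.
by rewrite leq_max h orbT.
Qed.

Lemma fin_bound (K : set nat) : finite_set K -> exists k, forall n, K n -> (n < k)%N.
Proof.
move=> /finite_fsetP [s ->]; have [k Hk] := seq_bound s.
by exists k => n /= ns; apply: Hk.
Qed.

Lemma o1_openP (A : set (option nat)) :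
  (A None -> exists k, forall n, (k <= n)%N -> A (Some n)) -> omega1_open A.
Proof.
move=> H [n|] An.
- by exists [set Some n] => // z ->.
- have [k Hk] := H An.
  exists [set z | match z with None => True | Some m => (k <= m)%N end].
  + by exists k.
  + by move=> [m|] //= /Hk.
Qed.

Lemma o1_openE (A : set (option nat)) : omega1_open A -> A None ->
  exists k, forall n, (k <= n)%N -> A (Some n).
Proof. by move=> H /H [V [k ->] VA]; exists k => n kn; apply: VA. Qed.

Lemma o1_open_ext (A B : set (option nat)) : omega1_open A ->
  (forall t, A t <-> B t) -> omega1_open B.
Proof.
move=> oA AB; apply: o1_openP => /AB /(o1_openE oA) [k Hk].
by exists k => n /Hk /AB.
Qed.

Lemma cont_tail (X : topologicalType) (g : option nat -> X) (U : set X) :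
  cont_from omega1_open g -> open U -> U (g None) ->
  exists k, forall n, (k <= n)%N -> U (g (Some n)).
Proof. by move=> gc oU; exact: (o1_openE (gc U oU)). Qed.

Lemma key (X : topologicalType) (hT1 : accessible_space X) : L_selective X ->
  forall (phi : nat -> set X) (p : X), (forall n, phi n !=set0 /\ closed (phi n)) ->
  (forall U, open U -> U p -> exists k, forall n, (k <= n)%N -> phi n `&` U !=set0) ->
  exists g : option nat -> X, cont_from omega1_open g /\ g None = p /\
    forall n, phi n (g (Some n)).
Proof.
move=> HL phi p Hphi Hl.
pose psi (y : option nat) := match y with None => [set p] | Some n => phi n end.
have [g [gc gs]] : exists g : option nat -> X, cont_from omega1_open g /\ forall y, psi y (g y).
  apply: HL.
- move=> [n|] /=; first exact: Hphi.
  split; first by exists p.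
  exact: accessible_closed_set1.
- move=> U oU; apply: o1_openP => /= -[q [-> Up]].
  have [k Hk] := Hl U oU Up; by exists k.
- exists g; split => //; split; first exact: (gs None).
  by move=> n; exact: (gs (Some n)).
Qed.

Lemma L_Sw (X : topologicalType) (hT1 : accessible_space X) :
  L_selective X -> Sw_selective X.
Proof.
move=> HL phi Hphi lphi.
have [p Pp] := (Hphi None).1.
have H n : exists g : option nat -> X, cont_from omega1_open g /\ g None = p /\
    forall m, phi (Some (n,m)) (g (Some m)).
  apply: (@key X hT1 HL (fun m => phi (Some (n,m))) p); first by move=> m; exact: (Hphi _).
  move=> U oU Up.
  have /(_ n) /o1_openE := lphi U oU.
  case; first by exists p.
  by move=> k Hk; exists k => m /Hk.
have [G HG] := choice H.
exists (fun y => match y with None => p | Some (n,m) => G n (Some m) end); split.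
- move=> U oU n; apply: (o1_open_ext ((HG n).1 U oU)) => -[m|] //=.
  by rewrite (HG n).2.1.
- by move=> [[n m]|] //=; exact: (HG n).2.2.
Qed.

Lemma L_S2 (X : topologicalType) (hT1 : accessible_space X) :
  L_selective X -> S2_selective X.
Proof.
move=> HL phi Hphi lphi.
have [p Pp] := (Hphi S2x).1.
have [g [gc [g0 gs]]] : exists g : option nat -> X, cont_from omega1_open g /\
    g None = p /\ forall n, phi (S2n n) (g (Some n)).
  apply: (@key X hT1 HL (fun n => phi (S2n n)) p); first by move=> n; exact: (Hphi _).
  move=> U oU Up.
  have /(_ S2x) := lphi U oU.
  case; first by exists p.
  move=> V [K [F [fK ->]]] VA; have [k Hk] := fin_bound fK.
  exists k => n kn; apply: (VA (S2n n)); right; left; exists n; split => //.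
  by move/Hk; rewrite ltnNge kn.
have H n : exists h : option nat -> X, cont_from omega1_open h /\
    h None = g (Some n) /\ forall m, phi (S2nm n m) (h (Some m)).
  apply: (@key X hT1 HL (fun m => phi (S2nm n m)) (g (Some n))); first by move=> m; exact: (Hphi _).
  move=> U oU Up.
  have /(_ (S2n n)) := lphi U oU.
  case; first by exists (g (Some n)); split => //; exact: gs.
  move=> V [K [fK ->]] VA; have [k Hk] := fin_bound fK.
  exists k => m km; apply: (VA (S2nm n m)); right; exists m; split => //.
  by move/Hk; rewrite ltnNge km.
have [h Hh] := choice H.
pose f y := match y with S2x => p | S2n n => g (Some n) | S2nm n m => h n (Some m) end.
exists f; split; last first.
  by case=> [|n|n m] /=; [exact: Pp | exact: gs | exact: (Hh n).2.2].
move=> U oU [|n|n m] /= Uf.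
- have Ug : U (g None) by rewrite g0.
  have [k Hk] := cont_tail gc oU Ug.
  have HF n : exists k', U (h n None) -> forall m, (k' <= m)%N -> U (h n (Some m)).
    have [Un|Un] := pselect (U (h n None)).
      by have [k' Hk'] := cont_tail (Hh n).1 oU Un; exists k'.
    by exists 0%N.
  have [F HFF] := choice HF.
  exists [set z | z = S2x \/ (exists n, ~ `I_k n /\ z = S2n n) \/
                  exists n m, ~ `I_k n /\ (F n < m)%N /\ z = S2nm n m].
    by exists `I_k, F; split => //; exact: finite_II.
  move=> z [->|[[n' [Kn ->]]|[n' [m' [Kn [Fm ->]]]]]] //=.
    by apply: Hk; rewrite leqNgt; apply/negP.
  apply: HFF; last exact: ltnW.
  rewrite (Hh n').2.1; apply: Hk; rewrite leqNgt; exact/negP.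
- have Uh : U (h n None) by rewrite (Hh n).2.1.
  have [k Hk] := cont_tail (Hh n).1 oU Uh.
  exists [set z | z = S2n n \/ exists m, ~ `I_k m /\ z = S2nm n m].
    by exists `I_k; split => //; exact: finite_II.
  move=> z [->|[m' [Km ->]]] //=.
  by apply: Hk; rewrite leqNgt; apply/negP.
- by exists [set S2nm n m] => // z ->.
Qed.

Definition r2 (y : S2pt) : option nat :=
  match y with S2x => None | S2n n => Some n | S2nm n _ => Some n end.
Definition i2 (y : option nat) : S2pt :=
  match y with None => S2x | Some n => S2n n end.

Lemma r2_cont A : omega1_open A -> S2_open (r2 @^-1` A).
Proof.
move=> oA [|n|n m] /= Ay.
- have [k Hk] := o1_openE oA Ay.
  exists [set z | z = S2x \/ (exists n, ~ `I_k n /\ z = S2n n) \/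
                  exists n m, ~ `I_k n /\ ((fun _ => 0%N) n < m)%N /\ z = S2nm n m].
    by exists `I_k, (fun _ => 0%N); split => //; exact: finite_II.
  move=> z [->|[[n' [Kn ->]]|[n' [m' [Kn [_ ->]]]]]] //=;
    by apply: Hk; rewrite leqNgt; apply/negP.
- exists [set z | z = S2n n \/ exists m, ~ set0 m /\ z = S2nm n m].
    by exists set0; split => //; exact: finite_set0.
  by move=> z [->|[m' [_ ->]]].
- by exists [set S2nm n m] => // z ->.
Qed.

Lemma i2_cont B : S2_open B -> omega1_open (i2 @^-1` B).
Proof.
move=> oB; apply: o1_openP => /= /oB [V [K [F [fK ->]]] VB].
have [k Hk] := fin_bound fK.
exists k => n kn; apply: VB; right; left; exists n; split => //.
by move/Hk; rewrite ltnNge kn.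
Qed.

Lemma S2_L (X : topologicalType) : S2_selective X -> L_selective X.
Proof.
move=> HS phi Hphi lphi.
have [|g [gc gs]] := HS (phi \o r2) (fun y => Hphi (r2 y)).
  by move=> U oU; exact: (r2_cont (lphi U oU)).
exists (g \o i2); split; last by case=> [n|]; [exact: (gs (i2 (Some n))) | exact: (gs (i2 None))].
by move=> U oU; exact: (i2_cont (gc U oU)).
Qed.

Definition rw (y : option (nat * nat)) : option nat :=
  match y with Some (0%N, m) => Some m | _ => None end.
Definition iw (t : option nat) : option (nat * nat) := Sw_quot (0%N, t).

Lemma rw_cont A : omega1_open A -> Sw_open (rw @^-1` A).
Proof.
move=> oA [|n].
- by apply: (o1_open_ext oA) => -[m|].
- by apply: o1_openP => /= h; exists 0%N.
Qed.

Lemma iw_cont B : Sw_open B -> omega1_open (iw @^-1` B).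
Proof. by move=> oB; exact: (oB 0%N). Qed.

Lemma Sw_L (X : topologicalType) : Sw_selective X -> L_selective X.
Proof.
move=> HS phi Hphi lphi.
have [|g [gc gs]] := HS (phi \o rw) (fun y => Hphi (rw y)).
  by move=> U oU; exact: (rw_cont (lphi U oU)).
exists (g \o iw); split; last by case=> [n|]; [exact: (gs (iw (Some n))) | exact: (gs (iw None))].
by move=> U oU; exact: (iw_cont (gc U oU)).
Qed.

Theorem mainTheorem16 (X : topologicalType) (hT1 : accessible_space X) :
  (L_selective X <-> S2_selective X) /\ (S2_selective X <-> Sw_selective X).
Proof.
split; split.
- exact: (@L_S2 X hT1).
- exact: (@S2_L X).
- by move=> h; apply: (@L_Sw X hT1); apply: (@S2_L X).
- by move=> h; apply: (@L_S2 X hT1); apply: (@Sw_L X).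
Qed.
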